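(* Let $f:D\to\{0,1\}$, $D\subseteq\{0,1\}^n$, be a non-constant $n$-bit partial Boolean function that depends on $k$ bits and can be computed exactly by a quantum 1-query algorithm. Then $\mathrm{rank}(G_f(1,0))\in\{1,\dots,n\}$, $\mathrm{rank}(G_f(1,1))\in\{1,\dots,n\}$, and $$\mathrm{rank}(G_f(1,0))+\mathrm{rank}(G_f(1,1))\le 2n+2-k.$$
   Context: An $n$-bit partial Boolean function is a map $f:D\to\{0,1\}$ with $D\subseteq\{0,1\}^n$. For $x\in\{0,1\}^n$ let $|P(x)\rangle_1=(1,x_1,\dots,x_n)^T\in\mathbb{R}^{n+1}$. For $b\in\{0,1\}$, $G_f(1,b)$ is the $(n+1)\times|\{x\in D:f(x)=b\}|$ matrix whose columns are the vectors $|P(x)\rangle_1$ for all $x\in D$ with $f(x)=b$. $f$ depends on $k$ bits if $k$ is the minimum, over all multilinear polynomials $p$ with $p(x)=f(x)$ for all $x\in D$, of the number of variables occurring in $p$. A quantum 1-query algorithm works in a finite-dimensional Hilbert space with orthonormal basis $\{|i,j'\rangle\}$, $i\in\{0,\dots,n\}$; the oracle is $O_x|i,j'\rangle=(-1)^{x_i}|i,j'\rangle$ for $i\ge1$, $O_x|0,j'\rangle=|0,j'\rangle$; the algorithm applies input-independent unitaries $U_0,O_x,U_1$ to an initial state and performs a projective measurement with outcomes in $\{0,1\}$; it computes $f$ exactly if for every $x\in D$ the outcome is $f(x)$ with probability 1. *)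

(* Defs.v *)
From HB Require Import structures.
From mathcomp Require Import all_boot all_order all_algebra.
From mathcomp Require Import reals complex.
Set Implicit Arguments. Unset Strict Implicit. Unset Printing Implicit Defensive.
Import Order.TTheory GRing.Theory Num.Theory.
Local Open Scope ring_scope.

(* n-bit inputs x = (x_1,...,x_n); x_i is stored at index i-1 : 'I_n. *)
Notation bits n := {ffun 'I_n -> bool}.

(* i-th entry (i in {0..n}) of |P(x)>_1 = (1, x_1, ..., x_n). *)
Definition Pvec_entry (R : ringType) (n : nat) (x : bits n) (i : 'I_n.+1) : R :=
  match unlift ord0 i with None => 1 | Some j => (x j)%:R end.

(* G_f(1,b): the (n+1) x |{x in D : f x = b}| real matrix whose columns are
   the |P(x)>_1 for x in D with f x = b (in the enumeration order of the set). *)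
Definition Gf (R : realType) (n : nat) (D : {set bits n}) (f : bits n -> bool)
  (b : bool) : 'M[R]_(n.+1, #|[set x in D | f x == b]|) :=
  \matrix_(i < n.+1, j < #|[set x in D | f x == b]|)
     Pvec_entry R (enum_val j) i.

(* Multilinear polynomials over R in x_1..x_n: coefficient c S of the
   monomial prod_{i in S} x_i. *)
Definition ml_eval (R : realType) (n : nat) (c : {set 'I_n} -> R) (x : bits n) : R :=
  \sum_(S : {set 'I_n}) c S * \prod_(i in S) (x i)%:R.

Definition ml_vars (R : realType) (n : nat) (c : {set 'I_n} -> R) : {set 'I_n} :=
  \bigcup_(S : {set 'I_n} | c S != 0) S.

Definition ml_represents (R : realType) (n : nat) (D : {set bits n})
  (f : bits n -> bool) (c : {set 'I_n} -> R) : Prop :=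
  forall x, x \in D -> ml_eval c x = (f x)%:R.

(* f depends on k bits: k is the minimum, over multilinear p agreeing with f
   on D, of the number of variables occurring in p. *)
Definition depends_on (R : realType) (n : nat) (D : {set bits n})
  (f : bits n -> bool) (k : nat) : Prop :=
  (exists c : {set 'I_n} -> R, ml_represents D f c /\ #|ml_vars c| = k) /\
  (forall c : {set 'I_n} -> R, ml_represents D f c -> (k <= #|ml_vars c|)%N).

Definition nonconstant (n : nat) (D : {set bits n}) (f : bits n -> bool) : Prop :=
  exists x y, [/\ x \in D, y \in D & f x != f y].

Section Quantum.
Variable R : realType.
Local Notation C := R[i].

Definition adj (d : nat) (A : 'M[C]_d) : 'M[C]_d := (map_mx Num.conj A)^T.

Definition unitary (d : nat) (U : 'M[C]_d) : Prop :=
  U *m adj U = 1%:M /\ adj U *m U = 1%:M.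

Definition sqnorm (d : nat) (v : 'cV[C]_d) : C :=
  \sum_(i < d) v i ord0 * (v i ord0)^*.

(* projective measurement with outcomes in {0,1} (false = 0, true = 1) *)
Definition proj_meas (d : nat) (P : bool -> 'M[C]_d) : Prop :=
  (forall b, adj (P b) = P b /\ P b *m P b = P b) /\ P false + P true = 1%:M.

(* Hilbert space with basis |i,j'>, i in {0..n}, j' in {0..m-1}; the basis
   vector |i,j'> is the coordinate with index i*m + j' in 'I_((n+1)*m).
   The oracle O_x |i,j'> = (-1)^{x_i} |i,j'> for i >= 1, identity for i = 0. *)
Definition oracle (n m : nat) (x : bits n) : 'M[C]_(n.+1 * m) :=
  \matrix_(k, l) (if k == l then
                    (if [exists j : 'I_n, (j.+1 == k %/ m)%N && x j] then -1 else 1)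
                  else 0).

Definition exact_1query (n : nat) (D : {set bits n}) (f : bits n -> bool) : Prop :=
  exists (m : nat) (psi0 : 'cV[C]_(n.+1 * m)) (U0 U1 : 'M[C]_(n.+1 * m))
         (P : bool -> 'M[C]_(n.+1 * m)),
    [/\ sqnorm psi0 = 1, unitary U0, unitary U1, proj_meas P &
     forall x, x \in D -> sqnorm (P (f x) *m (U1 *m oracle m x *m U0 *m psi0)) = 1].

End Quantum.

(* Main.v *)
Require Import Defs.
From HB Require Import structures.
From mathcomp Require Import all_boot all_order all_algebra.
From mathcomp Require Import reals complex.
From mathcomp Require Import ring lra zify.
Import Order.TTheory GRing.Theory Num.Theory.
Local Open Scope ring_scope.
Set Implicit Arguments. Unset Strict Implicit. Unset Printing Implicit Defensive.

Section Aux.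
Variable R : realType.
Local Notation C := R[i].

Definition hc (p q : nat) (A : 'M[C]_(p, q)) : 'M[C]_(q, p) := (map_mx Num.conj A)^T.

Lemma hcM p q r (A : 'M[C]_(p, q)) (B : 'M[C]_(q, r)) : hc (A *m B) = hc B *m hc A.
Proof. by rewrite /hc map_mxM trmx_mul. Qed.

Lemma hcD p q (A B : 'M[C]_(p, q)) : hc (A + B) = hc A + hc B.
Proof. by rewrite /hc map_mxD linearD. Qed.

Lemma hcK p q (A : 'M[C]_(p, q)) : hc (hc A) = A.
Proof. by apply/matrixP=> i j; rewrite !mxE conjCK. Qed.

Lemma adj_hc d (A : 'M[C]_d) : adj A = hc A.
Proof. by []. Qed.

Lemma sqnormE d (v : 'cV[C]_d) : sqnorm v = (hc v *m v) 0 0.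
Proof. by rewrite /sqnorm mxE; apply: eq_bigr => i _; rewrite !mxE mulrC. Qed.

Lemma sqnorm_eq0 d (v : 'cV[C]_d) : sqnorm v = 0 -> v = 0.
Proof.
move=> /eqP; rewrite /sqnorm psumr_eq0; last by move=> i _; exact: mul_conjC_ge0.
move=> /allP H; apply/matrixP=> i j; rewrite (ord1 j) !mxE.
by apply/eqP; rewrite -mul_conjC_eq0; apply/eqP/eqP/H; rewrite mem_index_enum.
Qed.

Lemma unitary_sqnorm d (U : 'M[C]_d) v : unitary U -> sqnorm (U *m v) = sqnorm v.
Proof.
by case=> _ H; rewrite !sqnormE hcM -mulmxA (mulmxA (hc U)) -adj_hc H mul1mx.
Qed.

Lemma proj_sqnorm d (P : bool -> 'M[C]_d) v : proj_meas P ->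
  sqnorm (P false *m v) + sqnorm (P true *m v) = sqnorm v.
Proof.
case=> HP H1; rewrite !sqnormE.
have E b : hc (P b *m v) *m (P b *m v) = hc v *m P b *m v.
  case: (HP b) => Ha Hb.
  by rewrite hcM -adj_hc Ha -!mulmxA (mulmxA (P b)) Hb.
rewrite !E; transitivity ((hc v *m P false *m v + hc v *m P true *m v) 0 0).
  by rewrite [in RHS]mxE.
by rewrite -mulmxDl -mulmxDr H1 mulmx1.
Qed.

Definition sgn n m (x : bits n) (k : 'I_(n.+1 * m)) : C :=
  if [exists j : 'I_n, (j.+1 == k %/ m)%N && x j] then -1 else 1.
Arguments sgn {n} m x k.

Lemma oracle_mul n m (x : bits n) (v : 'cV[C]_(n.+1 * m)) k :
  (oracle R m x *m v) k 0 = sgn m x k * v k 0.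
Proof.
rewrite mxE (bigD1 k) //= big1 ?addr0; first by rewrite mxE eqxx.
by move=> l /negbTE Hl; rewrite mxE eq_sym Hl mul0r.
Qed.

Lemma sgn_conj n m (x : bits n) k : (sgn m x k)^* * sgn m x k = 1.
Proof. by rewrite /sgn; case: ifP => _; rewrite ?rmorphN ?rmorph1 ?mulrNN mulr1. Qed.

Lemma oracle_sqnorm n m (x : bits n) v : sqnorm (oracle R m x *m v) = sqnorm v.
Proof.
apply: eq_bigr => k _; rewrite !oracle_mul rmorphM /= mulrACA.
by rewrite (mulrC (sgn _ _ _)) -(mulrC (_^*)) sgn_conj mul1r.
Qed.

Definition Umat n m (phi : 'cV[C]_(n.+1 * m)) : 'M[C]_(n.+1 * m, n.+1) :=
  \matrix_(k, i) (if i == ord0 then phi k 0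
                  else if (k %/ m == i)%N then -2 * phi k 0 else 0).
Arguments Umat {n} m phi.

Definition Pc n (x : bits n) : 'cV[C]_(n.+1) := \col_i Pvec_entry C x i.

Lemma bump0n i : bump 0 i = i.+1. Proof. by []. Qed.

Lemma oracle_lin n m (x : bits n) (phi : 'cV[C]_(n.+1 * m)) :
  oracle R m x *m phi = Umat m phi *m Pc x.
Proof.
apply/matrixP=> k j; rewrite (ord1 j) oracle_mul mxE big_ord_recl /=.
rewrite !mxE eqxx /Pvec_entry unlift_none mulr1.
under eq_bigr => i _ do rewrite !mxE /Pvec_entry liftK lift0.
rewrite /=.
rewrite /sgn; case: (pickP (fun j : 'I_n => j.+1 == k %/ m)%N) => [j0 Hj0|H0].
  rewrite (bigD1 j0) //= big1 ?addr0; last first.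
    move=> i Hi; case: eqP => [Hk|]; last by rewrite mul0r.
    move/eqP: Hj0; rewrite Hk => /succn_inj/val_inj Heq.
    by rewrite Heq eqxx in Hi.
  rewrite eq_sym Hj0.
  have -> : [exists j : 'I_n, (j.+1 == k %/ m)%N && x j] = x j0.
    apply/existsP/idP => [[j1 /andP[/eqP Hj Hx]]|Hx]; last by exists j0; rewrite Hj0.
    move/eqP: Hj0; rewrite -Hj => /succn_inj/val_inj Heq.
    by rewrite Heq.
  by case: (x j0); rewrite /= ?mulr1 ?mulr0 ?addr0 //; ring.
rewrite big1 ?addr0; last by move=> i _; rewrite eq_sym H0 mul0r.
have -> : [exists j : 'I_n, (j.+1 == k %/ m)%N && x j] = false.
  by apply/existsP => [[j1 /andP[Hj _]]]; rewrite H0 in Hj.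
by rewrite mul1r.
Qed.
End Aux.

Section Repr.
Variable R : realType.
Variable n : nat.
Variable S : {set 'I_n}.

Definition reprS (g : bits n -> R) := exists c : {set 'I_n} -> R,
  (forall T, c T != 0 -> T \subset S) /\ forall x, ml_eval c x = g x.

Lemma repr_ext g h : (forall x, g x = h x) -> reprS g -> reprS h.
Proof. by move=> E [c [Hc Hv]]; exists c; split=> // x; rewrite Hv E. Qed.

Lemma prod_bool (A : {set 'I_n}) (x : bits n) :
  \prod_(i in A) ((x i)%:R : R) = (A \subset [set i | x i])%:R.
Proof.
case: (boolP (A \subset _)) => H.
  by rewrite big1 // => i Hi; move/subsetP: H => /(_ i Hi); rewrite inE => ->.
move/subsetPn: H => [i Hi]; rewrite inE => /negbTE Hx.
by rewrite (bigD1 i) //= Hx mul0r.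
Qed.

Lemma repr_const a : reprS (fun _ => a).
Proof.
exists (fun T => if T == set0 then a else 0); split.
  by move=> T; case: (T =P set0) => [->|]; rewrite ?sub0set ?eqxx.
move=> x; rewrite /ml_eval (bigD1 set0) //= eqxx prod_bool sub0set mulr1.
by rewrite big1 ?addr0 // => T /negbTE ->; rewrite mul0r.
Qed.

Lemma repr_var j : j \in S -> reprS (fun x => (x j)%:R).
Proof.
move=> Hj; exists (fun T => if T == [set j] then 1 else 0); split.
  by move=> T; case: (T =P [set j]) => [->|]; rewrite ?sub1set ?eqxx.
move=> x; rewrite /ml_eval (bigD1 [set j]) //= eqxx prod_bool sub1set inE mul1r.
by rewrite big1 ?addr0 // => T /negbTE ->; rewrite mul0r.
Qed.

Lemma repr_add g h : reprS g -> reprS h -> reprS (fun x => g x + h x).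
Proof.
move=> [c [Hc Hv]] [d [Hd Hw]]; exists (fun T => c T + d T); split.
  move=> T H; case: (eqVneq (c T) 0) => [Hc0|/Hc //].
  by apply: Hd; move: H; rewrite Hc0 add0r.
by move=> x; rewrite -Hv -Hw /ml_eval -big_split; apply: eq_bigr => T _; rewrite mulrDl.
Qed.

Lemma repr_mul g h : reprS g -> reprS h -> reprS (fun x => g x * h x).
Proof.
move=> [c [Hc Hv]] [d [Hd Hw]].
exists (fun U => \sum_T \sum_T' (T :|: T' == U)%:R * (c T * d T')); split.
  move=> U H; apply/negPn/negP => HU; move/eqP: H; apply.
  apply: big1 => T _; apply: big1 => T' _.
  case: eqP => [E|]; last by rewrite mul0r.
  case: (eqVneq (c T) 0) => [->|/Hc HT]; first by rewrite !mul0r mulr0.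
  case: (eqVneq (d T') 0) => [->|/Hd HT']; first by rewrite !mulr0.
  by move: HU; rewrite -E subUset HT HT'.
move=> x; rewrite -Hv -Hw /ml_eval.
rewrite big_distrl /=; under [RHS]eq_bigr => T _ do rewrite big_distrr /=.
under eq_bigr => U _ do rewrite big_distrl /=.
under eq_bigr => U _ do under eq_bigr => T _ do rewrite big_distrl /=.
rewrite exchange_big /=; apply: eq_bigr => T _.
rewrite exchange_big /=; apply: eq_bigr => T' _.
rewrite (bigD1 (T :|: T')) //= [X in _ + X]big1 ?addr0; last first.
  by move=> U /negbTE; rewrite eq_sym => ->; rewrite !mul0r.
rewrite eqxx mul1r !prod_bool subUset.
by case: (T \subset _); case: (T' \subset _); rewrite /= ?mulr1 ?mulr0 ?mul0r.
Qed.

Lemma repr_sum (I : finType) (F : I -> bits n -> R) :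
  (forall i, reprS (F i)) -> reprS (fun x => \sum_i F i x).
Proof.
move=> H; rewrite /index_enum; elim: (Finite.enum I) => [|i s IH].
  by apply: repr_ext (repr_const 0) => x; rewrite big_nil.
by apply: repr_ext (repr_add (H i) IH) => x; rewrite big_cons.
Qed.
End Repr.

Section Main.
Variable R : realType.
Local Notation C := R[i].

Lemma sqnorm0 d : sqnorm (0 : 'cV[C]_d) = 0.
Proof. by rewrite /sqnorm big1 // => i _; rewrite mxE mul0r. Qed.

Lemma mxrankD_le p q (A B : 'M[C]_(p, q)) : (\rank (A + B)%R <= \rank A + \rank B)%N.
Proof.
have H1 := mxrankS (addmx_sub_adds (submx_refl A) (submx_refl B)).
have [H2 _] := mxrank_adds_leqif A B.
exact: leq_trans H1 H2.
Qed.

Lemma rank_G_N n (D : {set bits n}) f b d (N : 'M[C]_(d, n.+1)) :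
  (forall x, x \in D -> f x = b -> N *m Pc R x = 0) ->
  (\rank (Gf R D f b) + \rank N <= n.+1)%N.
Proof.
move=> H0; rewrite -(mxrank_map (real_complex R)) addnC.
apply: mulmx0_rank_max; apply/matrixP => k j.
have := enum_valP j; rewrite inE => /andP[HD /eqP Hb].
have := H0 _ HD Hb => /matrixP /(_ k 0); rewrite !mxE => E.
apply: eq_trans E; apply: eq_bigr => i _.
rewrite !mxE /Pvec_entry.
by case: unlift => [l|]; rewrite ?rmorph1 ?rmorph_nat.
Qed.

Lemma rank_G_pos n (D : {set bits n}) f b :
  (exists x, x \in D /\ f x = b) -> (0 < \rank (Gf R D f b))%N.
Proof.
move=> [x [Hx Hb]]; rewrite lt0n mxrank_eq0.
have pos : (0 < #|[set x in D | f x == b]|)%N.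
  by apply/card_gt0P; exists x; rewrite inE Hx Hb eqxx.
apply/eqP => /matrixP /(_ ord0 (Ordinal pos)); rewrite !mxE /Pvec_entry unlift_none.
by move/eqP; rewrite oner_eq0.
Qed.


Lemma rank_colsub p q r (g : 'I_r -> 'I_q) (A : 'M[C]_(p, q)) :
  (\rank (colsub g A) <= \rank A)%N.
Proof.
have -> : colsub g A = A *m colsub g 1%:M by rewrite mulmx_colsub mulmx1.
exact: mxrankM_maxl.
Qed.

Lemma rank_sum_lb n m (phi : 'cV[C]_(n.+1 * m)) (P : bool -> 'M[C]_(n.+1 * m)) (U1 : 'M[C]_(n.+1 * m)) :
  unitary U1 -> proj_meas P ->
  (#|[set j : 'I_n | col (lift ord0 j) (Umat phi) != 0%R]| <=
   \rank (P false *m U1 *m Umat phi) + \rank (P true *m U1 *m Umat phi))%N.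
Proof.
move=> [_ HU] [HP HP1].
set W := Umat phi; set good := [set j : 'I_n | _].
set s := #|good|.
pose g (t : 'I_s) := lift ord0 (enum_val t).
pose W' := colsub g W.
have E b : hc (colsub g (P b *m U1 *m W)) *m colsub g (P b *m U1 *m W)
           = hc W' *m (hc U1 *m P b *m U1) *m W'.
  rewrite -!mulmx_colsub !hcM -/W' -[hc (P b)]adj_hc (HP b).1.
  by rewrite -!mulmxA (mulmxA (P b) (P b)) (HP b).2.
have HK : hc (colsub g (P false *m U1 *m W)) *m colsub g (P false *m U1 *m W)
        + hc (colsub g (P true *m U1 *m W)) *m colsub g (P true *m U1 *m W)
        = hc W' *m W'.
  rewrite !E -mulmxDl -mulmxDr -mulmxDl -mulmxDr HP1 mulmx1 -adj_hc HU mulmx1 //.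
have Hle : (\rank (hc W' *m W') <= \rank (P false *m U1 *m W) + \rank (P true *m U1 *m W))%N.
  rewrite -HK; apply: leq_trans (mxrankD_le _ _) _; apply: leq_add;
  by apply: leq_trans (mxrankM_maxr _ _) (rank_colsub _ _).
apply: leq_trans Hle; rewrite leq_eqVlt; apply/orP; left; apply/eqP; apply/esym.
have Hdiag : hc W' *m W' = diag_mx (\row_t (hc W' *m W') t t).
  apply/matrixP => t t'; rewrite [RHS]mxE [in RHS]mxE.
  case: eqP => [->|/eqP Htt] //; rewrite mulr0n mxE.
  have gneq u : (g u == ord0) = false by rewrite eq_sym (negbTE (neq_lift _ _)).
  apply: big1 => k _; rewrite !mxE !gneq.
  case: ((k %/ m)%N =P g t) => [Hk|_]; last by rewrite rmorph0 mul0r.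
  case: ((k %/ m)%N =P g t') => [Hk'|_]; last by rewrite mulr0.
  exfalso; move: Htt; rewrite Hk in Hk'.
  by move/val_inj/lift_inj/enum_val_inj: Hk' => ->; rewrite eqxx.
rewrite Hdiag mxrank_unit // unitmxE det_diag unitfE.
apply/prodf_neq0 => t _; rewrite mxE.
have := enum_valP t; rewrite inE -/(g t) => Hc.
apply/eqP => H0; move: Hc; rewrite (_ : col (g t) W = 0) ?eqxx //.
apply: sqnorm_eq0; rewrite -H0 /sqnorm mxE; apply: eq_bigr => k _.
by rewrite !mxE mulrC.
Qed.


Lemma ReD (a b : C) : complex.Re (a + b) = complex.Re a + complex.Re b.
Proof. by case: a; case: b. Qed.
Lemma ImD (a b : C) : complex.Im (a + b) = complex.Im a + complex.Im b.
Proof. by case: a; case: b. Qed.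
Lemma Re_sum (I : Type) (r : seq I) (F : I -> C) :
  complex.Re (\sum_(i <- r) F i) = \sum_(i <- r) complex.Re (F i).
Proof. exact: (big_morph _ ReD (erefl _)). Qed.
Lemma Im_sum (I : Type) (r : seq I) (F : I -> C) :
  complex.Im (\sum_(i <- r) F i) = \sum_(i <- r) complex.Im (F i).
Proof. exact: (big_morph _ ImD (erefl _)). Qed.
Lemma Re_normsq (z : C) :
  complex.Re (z * z^*) = complex.Re z ^+ 2 + complex.Im z ^+ 2.
Proof. by case: z => a b; rewrite /= !expr2; ring. Qed.
Lemma Re_Pv n (w : C) (x : bits n) i :
  complex.Re (w * Pvec_entry C x i) = complex.Re w * Pvec_entry R x i.
Proof.
rewrite /Pvec_entry; case: unlift => [j|]; last by rewrite !mulr1.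
by case: (x j); rewrite ?mulr1 ?mulr0 //; case: w.
Qed.
Lemma Im_Pv n (w : C) (x : bits n) i :
  complex.Im (w * Pvec_entry C x i) = complex.Im w * Pvec_entry R x i.
Proof.
rewrite /Pvec_entry; case: unlift => [j|]; last by rewrite !mulr1.
by case: (x j); rewrite ?mulr1 ?mulr0 //; case: w.
Qed.

Lemma repr_lin n (S : {set 'I_n}) (a : 'I_n.+1 -> R) :
  (forall j, j \notin S -> a (lift ord0 j) = 0) ->
  reprS S (fun x => \sum_i a i * Pvec_entry R x i).
Proof.
move=> Ha; apply: repr_sum => i.
case: (unliftP ord0 i) => [j ->|->].
  case: (boolP (j \in S)) => Hj.
    apply: repr_ext (repr_mul (repr_const _ (a (lift ord0 j))) (repr_var R Hj)) => x.
    by rewrite /Pvec_entry liftK.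
  by apply: repr_ext (repr_const _ 0) => x; rewrite Ha // mul0r.
by apply: repr_ext (repr_const _ (a ord0)) => x; rewrite /Pvec_entry unlift_none mulr1.
Qed.

Lemma repr_N n d (S : {set 'I_n}) (N : 'M[C]_(d, n.+1)) :
  (forall j, j \notin S -> col (lift ord0 j) N = 0) ->
  reprS S (fun x => complex.Re (sqnorm (N *m Pc R x))).
Proof.
move=> HN.
have Hc j k : j \notin S -> N k (lift ord0 j) = 0.
  by move=> /HN /matrixP /(_ k 0); rewrite !mxE.
pose re k x := \sum_i complex.Re (N k i) * Pvec_entry R x i.
pose im k x := \sum_i complex.Im (N k i) * Pvec_entry R x i.
have Hre k : reprS S (re k).
  have Ha j : j \notin S -> complex.Re (N k (lift ord0 j)) = 0 by move=> Hj; rewrite Hc.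
  exact: (@repr_lin n S (fun i => complex.Re (N k i)) Ha).
have Him k : reprS S (im k).
  have Ha j : j \notin S -> complex.Im (N k (lift ord0 j)) = 0 by move=> Hj; rewrite Hc.
  exact: (@repr_lin n S (fun i => complex.Im (N k i)) Ha).
have Hr : reprS S (fun x => \sum_k (re k x * re k x + im k x * im k x)).
  apply: (@repr_sum R n S _ (fun k x => re k x * re k x + im k x * im k x)) => k.
  exact: repr_add (repr_mul (Hre k) (Hre k)) (repr_mul (Him k) (Him k)).
apply: repr_ext Hr.
move=> x /=; rewrite /sqnorm Re_sum; apply: eq_bigr => k _.
rewrite Re_normsq !mxE Re_sum Im_sum !expr2; congr (_ * _ + _ * _);
  by apply: eq_bigr => i _; rewrite mxE ?Re_Pv ?Im_Pv.
Qed.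

End Main.


Unset Implicit Arguments.

Theorem theorem4 (R : realType) (n : nat) (D : {set {ffun 'I_n -> bool}})
  (f : {ffun 'I_n -> bool} -> bool) (k : nat) :
  nonconstant D f ->
  depends_on R D f k ->
  exact_1query R D f ->
  [/\ (1 <= \rank (Gf R D f false) <= n)%N,
      (1 <= \rank (Gf R D f true) <= n)%N &
      (\rank (Gf R D f false) + \rank (Gf R D f true) <= 2 * n + 2 - k)%N].
Proof.
move=> [x1 [x2 [Hx1 Hx2 Hf12]]] [_ Hk] [m [psi0 [U0 [U1 [P [Hpsi HU0 HU1 HP Hex]]]]]].
set phi := U0 *m psi0.
set W := Umat phi.
pose N b := P b *m U1 *m W.
have NP x b : N b *m Pc R x = P b *m (U1 *m oracle R m x *m U0 *m psi0).
  by rewrite /N /W -!mulmxA -oracle_lin.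
have Hst x : sqnorm (U1 *m oracle R m x *m U0 *m psi0) = 1.
  by rewrite -!mulmxA unitary_sqnorm // oracle_sqnorm unitary_sqnorm.
have Nzero x : x \in D -> N (~~ f x) *m Pc R x = 0.
  move=> Hx; apply: sqnorm_eq0; rewrite NP.
  have := proj_sqnorm (U1 *m oracle R m x *m U0 *m psi0) HP; rewrite Hst.
  have := Hex x Hx; case: (f x) => /= ->.
    by move=> H; apply: (addIr 1); rewrite add0r.
  by move=> H; apply: (addrI 1); rewrite addr0.
have Nnz x : x \in D -> N (f x) *m Pc R x != 0.
  move=> Hx; rewrite NP; apply/eqP => H; have := Hex x Hx.
  by rewrite H sqnorm0 => /eqP; rewrite eq_sym oner_eq0.
have ex b : exists x, x \in D /\ f x = b.
  case Hb1 : (f x1 == b); first by exists x1; rewrite (eqP Hb1).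
  exists x2; split => //; move: Hf12 Hb1; case: (f x1); case: (f x2); case: b => //.
have rN b : (0 < \rank (N b))%N.
  have [x [Hx Hb]] := ex b; rewrite lt0n mxrank_eq0; rewrite -Hb.
  by apply/eqP => H; move: (Nnz x Hx); rewrite H mul0mx eqxx.
have rG b : (\rank (Gf R D f b) + \rank (N (~~ b)) <= n.+1)%N.
  by apply: rank_G_N => x Hx Hb; rewrite -Hb Nzero.
have pG b : (0 < \rank (Gf R D f b))%N by apply: rank_G_pos.
set good := [set j : 'I_n | col (lift ord0 j) W != 0%R].
have Hgood : (#|good| <= \rank (N false) + \rank (N true))%N.
  by apply: rank_sum_lb.
have Hrep : reprS good (fun x => complex.Re (sqnorm (N true *m Pc R x))).
  apply: repr_N => j Hj; rewrite /N colE -!mulmxA -colE.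
  by move: Hj; rewrite inE negbK => /eqP ->; rewrite !mulmx0.
have [c [Hc Hcv]] := Hrep.
have Hrepf : ml_represents D f c.
  move=> x Hx; rewrite Hcv.
  case Hfx : (f x).
    by rewrite NP; have := Hex x Hx; rewrite Hfx => ->.
  have H0 : N true *m Pc R x = 0 by have := Nzero x Hx; rewrite Hfx.
  by rewrite H0 sqnorm0.
have Hkc := Hk c Hrepf.
have Hvars : (#|ml_vars c| <= #|good|)%N.
  apply: subset_leq_card; apply/bigcupsP => T HT; exact: Hc.
have := rG false; have := rG true; have := rN false; have := rN true.
have := pG false; have := pG true; move: Hgood Hvars Hkc => /=.
move=> *; split; [apply/andP; split | apply/andP; split | ]; lia.
Qed.
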